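(* Let $n\ge 5$ and let $f$ be an RDF of $P(n,2)$ of weight $\gamma_R(P(n,2))$ with $|V_2|$ minimum among all such minimum-weight RDFs. For any index $i$, if $r_f(V'(i,7)) \le 0.5$, then $v_{i+2}\notin V_2$ and $v_{i+4}\notin V_2$.
   Context: For integers $n \ge 3$ and $1 \le k < n/2$, the generalized Petersen graph $P(n,k)$ has vertex set $\{v_i, u_i : 0 \le i \le n-1\}$ and edge set $\{v_iv_{i+1},\ v_iu_i,\ u_iu_{i+k} : 0 \le i \le n-1\}$, with subscripts taken modulo $n$. A Roman domination function (RDF) of a graph $G$ is a function $f: V(G)\to\{0,1,2\}$ such that every vertex $u$ with $f(u)=0$ is adjacent to at least one vertex $v$ with $f(v)=2$. Its weight is $\sum_{u\in V(G)} f(u)$; $\gamma_R(G)$ is the minimum weight of an RDF of $G$. For an RDF $f$ write $V_i=\{w: f(w)=i\}$, $i=0,1,2$. Define $g_f(w)=0.5$ if $w\in V_2$, $g_f(w)=1$ if $w\in V_1$, and $g_f(w)=0.5\,|N(w)\cap V_2|$ if $w\in V_0$, where $N(w)$ is the set of neighbors of $w$. Let $r_f(w)=g_f(w)-0.5$ and, for $S\subseteq V(P(n,2))$, $r_f(S)=\sum_{w\in S} r_f(w)$. For an integer $i$ and $t\ge 1$, $V'(i,t)=\{v_j,u_j : i\le j\le i+t-1\}$ (subscripts modulo $n$). *)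

(* Defs.v *)
From HB Require Import structures.
From mathcomp Require Import all_boot all_order all_algebra.
Set Implicit Arguments. Unset Strict Implicit. Unset Printing Implicit Defensive.
Import Order.TTheory GRing.Theory Num.Theory.

(* Vertices of P(n,2): (false, i) is v_i (outer), (true, i) is u_i (inner). *)
Definition vtx (n : nat) : finType := (bool * 'I_n)%type.

Definition padj (n : nat) (x y : vtx n) : bool :=
  match x.1, y.1 with
  | false, false => ((x.2 + 1) %% n == y.2) || ((y.2 + 1) %% n == x.2)
  | true, true => ((x.2 + 2) %% n == y.2) || ((y.2 + 2) %% n == x.2)
  | _, _ => (x.2 : nat) == y.2
  end.

Definition vv (n : nat) (i : nat) (x : vtx n) : bool :=
  (x.1 == false) && ((x.2 : nat) == i %% n).

Definition is_rdf (n : nat) (f : vtx n -> nat) : Prop :=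
  (forall w, f w <= 2) /\
  (forall w, f w = 0 -> exists w', padj w w' && (f w' == 2)).

Definition weight (n : nat) (f : vtx n -> nat) : nat := \sum_(w : vtx n) f w.

Definition V2 (n : nat) (f : vtx n -> nat) : {set vtx n} := [set w | f w == 2].

Local Open Scope ring_scope.

Definition g_f (n : nat) (f : vtx n -> nat) (w : vtx n) : rat :=
  if f w == 2%N then 1 / 2
  else if f w == 1%N then 1
  else (#|[set y | padj w y && (f y == 2%N)]|)%:R / 2.

Definition r_f (n : nat) (f : vtx n -> nat) (w : vtx n) : rat := g_f f w - 1 / 2.

Definition r_fS (n : nat) (f : vtx n -> nat) (S : {set vtx n}) : rat :=
  \sum_(w in S) r_f f w.

Definition Vp (n : nat) (i t : nat) : {set vtx n} :=
  [set w : vtx n | has (fun j => (w.2 : nat) == (j %% n)%N) (iota i t)].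

(* Main.v *)
Require Import Defs.
From HB Require Import structures.
From mathcomp Require Import all_boot all_order all_algebra.
From Stdlib Require Import Lia.
Set Implicit Arguments. Unset Strict Implicit. Unset Printing Implicit Defensive.

Ltac nlia := repeat match goal with H : is_true (_ <= _) |- _ => move/ssrnat.leP: H => ? end;
  try apply/ssrnat.leP; unfold addn, subn, muln, addn_rec, subn_rec, muln_rec in *; lia.

Definition upd (n : nat) (f : vtx n -> nat) (x : vtx n) (v : nat) : vtx n -> nat :=
  fun w => if w == x then v else f w.

Lemma weight_upd n (f : vtx n -> nat) x v : weight (upd f x v) + f x = weight f + v.
Proof.
rewrite /weight (bigD1 x) // [X in _ = X + _](bigD1 x) //=.
have -> : \sum_(w | w != x) upd f x v w = \sum_(w | w != x) f w.
  by apply: eq_bigr => w /negbTE; rewrite /upd => ->.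
by rewrite /upd eqxx [LHS]addnAC [RHS]addnAC [f x + v]addnC.
Qed.

Lemma padj_sym n (x y : vtx n) : padj x y = padj y x.
Proof. case: x => [[] a]; case: y => [[] b]; rewrite /padj /=; by [rewrite orbC | rewrite eq_sym]. Qed.

Lemma V2_del n (f g : vtx n -> nat) x : f x = 2 ->
  (forall w, w != x -> (g w == 2) = (f w == 2)) -> g x != 2 -> (#|V2 g| < #|V2 f|)%N.
Proof.
move=> Hfx Hw Hgx.
have -> : V2 g = V2 f :\ x.
  apply/setP => w; rewrite !inE; case: (eqVneq w x) => [->|Hne] /=.
    by rewrite (negbTE Hgx).
  by rewrite Hw.
by rewrite [in X in (_ < X)%N](cardsD1 x) !inE Hfx eqxx.
Qed.

Lemma no_P1 n (f : vtx n -> nat) : is_rdf f ->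
  (forall g : vtx n -> nat, is_rdf g -> (weight f <= weight g)%N) ->
  forall w y, f w = 1 -> padj w y -> f y = 2 -> False.
Proof.
move=> [Hb Hd] H3 w y Hw Hwy Hy.
have Hyw : y != w by apply/eqP => E; move: Hy; rewrite E Hw.
have Hg : is_rdf (upd f w 0).
  split=> [z|z]; rewrite /upd.
    by case: eqP.
  case: eqP => [-> _|Hzw Hz].
    by exists y; rewrite Hwy (negbTE Hyw) Hy.
  have [w' /andP [Hzw' Hw']] := Hd z Hz.
  exists w'; rewrite Hzw' /=; case: (eqVneq w' w) => [E|Hne].
    by move: Hw'; rewrite E Hw.
  exact: Hw'.
have := H3 _ Hg; have := weight_upd f w 0; rewrite Hw addn0 addn1 => <-.
by rewrite ltnn.
Qed.

Definition privb n (f : vtx n -> nat) (x p : vtx n) : bool :=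
  [&& padj x p, f p == 0 & [forall z, (padj p z && (f z == 2)) ==> (z == x)]].

Lemma nonpriv n (f : vtx n -> nat) x z : padj x z -> f z = 0 -> ~~ privb f x z ->
  exists z', [/\ padj z z', f z' = 2 & z' != x].
Proof.
move=> Hxz Hz; rewrite /privb Hxz Hz eqxx /= negb_forall => /existsP [z'].
rewrite negb_imply => /andP [/andP [H1 /eqP H2] H3].
by exists z'.
Qed.

Lemma P2 n (f : vtx n -> nat) : is_rdf f ->
  (forall g : vtx n -> nat, is_rdf g -> (weight f <= weight g)%N) ->
  (forall g : vtx n -> nat, is_rdf g -> weight g = weight f -> (#|V2 f| <= #|V2 g|)%N) ->
  forall x, f x = 2 -> exists p q, [/\ p != q, privb f x p & privb f x q].
Proof.
move=> [Hb Hd] H3 H4 x Hx.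
set S := [set p | privb f x p].
case: (ltnP 1 #|S|) => [/card_gt1P [p [q [Hp Hq Hpq]]]|Hle].
  by exists p, q; rewrite !inE in Hp Hq.
have Huniq : forall p q, privb f x p -> privb f x q -> p = q.
  move=> p q Hp Hq; apply/eqP/negPn/negP => Hpq.
  have : (1 < #|S|)%N by apply/card_gt1P; exists p, q; rewrite !inE.
  by rewrite ltnNge Hle.
exfalso.
case: (set_0Vmem S) => [S0|[p0]].
-
  have Hg : is_rdf (upd f x 1).
    split=> [z|z]; rewrite /upd.
      by case: eqP.
    case: eqP => [//|/eqP Hzx Hz].
    have [w' /andP [Hzw' /eqP Hw']] := Hd z Hz.
    case: (eqVneq w' x) => [E|Hw'x].
      have Hnp : ~~ privb f x z.
        apply/negP => Hp; have : z \in S by rewrite inE.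
        by rewrite S0 inE.
      have Hxz : padj x z by rewrite padj_sym -E.
      have [z' [H1 H2 H3']] := nonpriv Hxz Hz Hnp.
      by exists z'; rewrite H1 (negbTE H3') H2.
    by exists w'; rewrite Hzw' (negbTE Hw'x) Hw'.
  have := H3 _ Hg; have := weight_upd f x 1; rewrite Hx addn1 addn2 => /eqP.
  rewrite eqSS => /eqP <-; by rewrite ltnn.
- rewrite inE => Hp0.
  have Hp0x : p0 != x.
    by apply/eqP => E; move: Hp0; rewrite /privb E => /and3P [_ /eqP]; rewrite Hx.
  have Hfp0 : f p0 = 0 by move: Hp0 => /and3P [_ /eqP].
  set g := upd (upd f x 1) p0 1.
  have Hg : is_rdf g.
    split=> [z|z]; rewrite /g /upd.
      by case: eqP => //; case: eqP.
    case: eqP => // /eqP Hzp0; case: eqP => // /eqP Hzx Hz.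
    have [w' /andP [Hzw' /eqP Hw']] := Hd z Hz.
    have Hw'p0 : w' != p0 by apply/eqP => E; move: Hw'; rewrite E Hfp0.
    case: (eqVneq w' x) => [E|Hw'x].
      have Hnp : ~~ privb f x z.
        by apply/negP => Hp; move: (Huniq _ _ Hp Hp0) => E'; move: Hzp0; rewrite E' eqxx.
      have Hxz : padj x z by rewrite padj_sym -E.
      have [z' [H1 H2 H3']] := nonpriv Hxz Hz Hnp.
      have Hz'p0 : z' != p0 by apply/eqP => E'; move: H2; rewrite E' Hfp0.
      by exists z'; rewrite H1 (negbTE H3') (negbTE Hz'p0) H2.
    by exists w'; rewrite Hzw' (negbTE Hw'x) (negbTE Hw'p0) Hw'.
  have Hw1 := weight_upd f x 1; rewrite Hx addn1 addn2 in Hw1.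
  have Hw2 := weight_upd (upd f x 1) p0 1.
  have E1 : upd f x 1 p0 = 0 by rewrite /upd (negbTE Hp0x).
  rewrite E1 addn0 in Hw2.
  have Hwg : weight g = weight f.
    by move: Hw1; rewrite /g Hw2; nlia.
  have := H4 _ Hg Hwg.
  have -> : (#|V2 f| <= #|V2 g|)%N = false.
    apply/negbTE; rewrite -ltnNge; apply: (V2_del (x:=x)) => //.
      move=> w Hwx; rewrite /g /upd (negbTE Hwx).
      by case: ifP => [/eqP ->|_] //; rewrite Hfp0.
    have Exp : (x == p0) = false by rewrite eq_sym; apply/negbTE.
    by rewrite /g /upd Exp eqxx.
  by [].
Qed.

Lemma no_P3 n (f : vtx n -> nat) : is_rdf f ->
  (forall g : vtx n -> nat, is_rdf g -> (weight f <= weight g)%N) ->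
  (forall g : vtx n -> nat, is_rdf g -> weight g = weight f -> (#|V2 f| <= #|V2 g|)%N) ->
  (forall x : vtx n, padj x x = false) ->
  (forall x : vtx n, exists a b c, forall w, padj x w -> w \in [:: a; b; c]) ->
  forall x y, f x = 2 -> padj x y -> f y = 2 -> False.
Proof.
move=> Hr H3 H4 Hirr Hdeg x y Hx Hxy Hy.
have [p [q [Hpq Hp Hq]]] := P2 Hr H3 H4 Hx.
case: Hr => [Hb Hd].
move: (Hp) (Hq) => /and3P [Hxp /eqP Hfp Hpp] /and3P [Hxq /eqP Hfq Hpq'].
have Hyx : y != x by apply/eqP => E; move: Hxy; rewrite E Hirr.
have Hpx : p != x by apply/eqP => E; move: Hfp; rewrite E Hx.
have Hqx : q != x by apply/eqP => E; move: Hfq; rewrite E Hx.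
have Hyp : y != p by apply/eqP => E; move: Hfp; rewrite -E Hy.
have Hyq : y != q by apply/eqP => E; move: Hfq; rewrite -E Hy.
set g := upd (upd (upd f x 0) p 1) q 1.
have Hg : is_rdf g.
  split=> [z|z]; rewrite /g /upd.
    by case: ifP => //; case: ifP => //; case: ifP => //.
  case: ifP => // Hzq; case: ifP => // Hzp; case: ifP => [/eqP Ezx _|Hzx Hz].
    exists y; rewrite Ezx Hxy /=.
    by rewrite (negbTE Hyq) (negbTE Hyp) (negbTE Hyx) Hy.
  have [w' /andP [Hzw' /eqP Hw']] := Hd z Hz.
  have Hw'p : w' != p by apply/eqP => E; move: Hw'; rewrite E Hfp.
  have Hw'q : w' != q by apply/eqP => E; move: Hw'; rewrite E Hfq.
  case: (eqVneq w' x) => [E|Hw'x].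
    exfalso.
    have [a [b [c Habc]]] := Hdeg x.
    have Hxz : padj x z by rewrite padj_sym -E.
    have Hzy : z != y by apply/eqP => E'; move: Hz; rewrite E' Hy.
    have : (size [:: p; q; y; z] <= size [:: a; b; c])%N.
      apply: uniq_leq_size.
        rewrite /= !inE !negb_or Hpq (eq_sym p y) Hyp (eq_sym p z) Hzp.
        rewrite (eq_sym q y) Hyq (eq_sym q z) Hzq (eq_sym y z) Hzy.
        by [].
      move=> w Hw; apply: Habc; move: Hw; rewrite !inE => /or4P [] /eqP -> //.
    by [].
  exists w'; rewrite Hzw' /=.
  by rewrite (negbTE Hw'q) (negbTE Hw'p) (negbTE Hw'x) Hw'.
have Hw1 := weight_upd f x 0; rewrite Hx addn0 in Hw1.
have Hw2 := weight_upd (upd f x 0) p 1.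
have E1 : upd f x 0 p = 0 by rewrite /upd (negbTE Hpx).
rewrite E1 addn0 in Hw2.
have Hw3 := weight_upd (upd (upd f x 0) p 1) q 1.
have E2 : upd (upd f x 0) p 1 q = 0.
  by rewrite /upd eq_sym (negbTE Hpq) (negbTE Hqx).
rewrite E2 addn0 in Hw3.
have Hwg : weight g = weight f by move: Hw1; rewrite /g Hw3 Hw2; nlia.
have := H4 _ Hg Hwg.
have -> : (#|V2 f| <= #|V2 g|)%N = false.
  apply/negbTE; rewrite -ltnNge; apply: (V2_del (x:=x)) => //.
    move=> w Hwx; rewrite /g /upd (negbTE Hwx).
    case: ifP => [/eqP ->|_]; first by rewrite Hfq.
    by case: ifP => [/eqP ->|_] //; rewrite Hfp.
  have Exp : (x == p) = false by rewrite eq_sym; apply/negbTE.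
  have Exq : (x == q) = false by rewrite eq_sym; apply/negbTE.
  by rewrite /g /upd Exq Exp eqxx.
by [].
Qed.

Definition Vx (n m : nat) : vtx n.+1 := (false, inord (m %% n.+1)).
Definition Ux (n m : nat) : vtx n.+1 := (true, inord (m %% n.+1)).

Lemma val_io n m : ((inord (m %% n.+1) : 'I_n.+1) : nat) = m %% n.+1.
Proof. by rewrite inordK // ltn_pmod. Qed.

Lemma io_eq n a b : ((inord (a %% n.+1) : 'I_n.+1) == inord (b %% n.+1)) = (a %% n.+1 == b %% n.+1).
Proof. by rewrite -val_eqE /= !val_io. Qed.

Lemma eqVV n a b : (Vx n a == Vx n b) = (a %% n.+1 == b %% n.+1).
Proof. by rewrite /Vx xpair_eqE io_eq. Qed.
Lemma eqUU n a b : (Ux n a == Ux n b) = (a %% n.+1 == b %% n.+1).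
Proof. by rewrite /Ux xpair_eqE io_eq. Qed.
Lemma eqVU n a b : (Vx n a == Ux n b) = false.
Proof. by rewrite /Vx /Ux xpair_eqE. Qed.
Lemma eqUV n a b : (Ux n a == Vx n b) = false.
Proof. by rewrite /Vx /Ux xpair_eqE. Qed.

Lemma mod_neq n c1 c2 : 4 <= n -> c1 != c2 -> c1 <= c2 + 4 -> c2 <= c1 + 4 ->
  (c1 %% n.+1 == c2 %% n.+1) = false.
Proof.
move=> Hn Hne H1 H2; apply/negbTE.
wlog Hlt : c1 c2 Hne H1 H2 / c1 < c2.
  move=> W; case: (ltngtP c1 c2) => H; first exact: W.
    by rewrite eq_sym; apply: W => //; rewrite eq_sym.
  by move: Hne; rewrite H eqxx.
have -> : c2 = c1 + (c2 - c1) by rewrite subnKC // ltnW.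
rewrite -[X in X %% _ == _]addn0 eqn_modDl mod0n modn_small; first by rewrite eq_sym subn_eq0 -ltnNge.
nlia.
Qed.

Lemma neqVV n K c1 c2 : 4 <= n -> c1 != c2 -> c1 <= c2 + 4 -> c2 <= c1 + 4 ->
  (Vx n (K + c1) == Vx n (K + c2)) = false.
Proof. by move=> *; rewrite eqVV eqn_modDl mod_neq. Qed.
Lemma neqUU n K c1 c2 : 4 <= n -> c1 != c2 -> c1 <= c2 + 4 -> c2 <= c1 + 4 ->
  (Ux n (K + c1) == Ux n (K + c2)) = false.
Proof. by move=> *; rewrite eqUU eqn_modDl mod_neq. Qed.

Lemma Vx_mod n a b : a %% n.+1 = b %% n.+1 -> Vx n a = Vx n b.
Proof. by rewrite /Vx => ->. Qed.
Lemma Ux_mod n a b : a %% n.+1 = b %% n.+1 -> Ux n a = Ux n b.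
Proof. by rewrite /Ux => ->. Qed.

Lemma adjVVr n K c : padj (Vx n (K + c)) (Vx n (K + c.+1)).
Proof. by rewrite /padj /= !val_io; apply/orP; left; rewrite modnDml addn1 addnS. Qed.
Lemma adjVVl n K c : padj (Vx n (K + c.+1)) (Vx n (K + c)).
Proof. by rewrite /padj /= !val_io; apply/orP; right; rewrite modnDml addn1 addnS. Qed.
Lemma adjUUr n K c : padj (Ux n (K + c)) (Ux n (K + c.+2)).
Proof. by rewrite /padj /= !val_io; apply/orP; left; rewrite modnDml addn2 !addnS. Qed.
Lemma adjUUl n K c : padj (Ux n (K + c.+2)) (Ux n (K + c)).
Proof. by rewrite /padj /= !val_io; apply/orP; right; rewrite modnDml addn2 !addnS. Qed.
Lemma adjVU n K c : padj (Vx n (K + c)) (Ux n (K + c)).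
Proof. by rewrite /padj /= !val_io. Qed.
Lemma adjUV n K c : padj (Ux n (K + c)) (Vx n (K + c)).
Proof. by rewrite /padj /= !val_io. Qed.

Lemma ord_io n (o : 'I_n.+1) : o = inord (o %% n.+1).
Proof. by apply: val_inj; rewrite /= val_io modn_small. Qed.

Lemma nbrV n m w : padj (Vx n m) w -> w \in [:: Vx n (m + n); Vx n m.+1; Ux n m].
Proof.
case: w => [[] o]; rewrite /padj /= !val_io !inE.
- move=> /eqP Ho; apply/orP; right; apply/orP; right.
  by rewrite /Ux xpair_eqE /= -val_eqE /= val_io -Ho ?modn_mod.
- case/orP => /eqP Ho.
  + apply/orP; right; apply/orP; left.
    by rewrite /Vx xpair_eqE /= -val_eqE /= val_io -Ho modnDml addn1 eqxx.
  + apply/orP; left.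
    rewrite /Vx xpair_eqE /= -val_eqE /= val_io.
    have : (o + 1 == m + n + 1 %[mod n.+1]).
      by rewrite Ho -addnA addn1 modnDr.
    by rewrite eqn_modDr (modn_small (ltn_ord o)) eq_sym.
Qed.

Lemma nbrU n m w : 1 <= n -> padj (Ux n m) w -> w \in [:: Ux n (m + n.-1); Ux n m.+2; Vx n m].
Proof.
move=> Hn; case: w => [[] o]; rewrite /padj /= !val_io !inE.
- case/orP => /eqP Ho.
  + apply/orP; right; apply/orP; left.
    by rewrite /Ux xpair_eqE /= -val_eqE /= val_io -Ho modnDml addn2 eqxx.
  + apply/orP; left.
    rewrite /Ux xpair_eqE /= -val_eqE /= val_io.
    have : (o + 2 == m + n.-1 + 2 %[mod n.+1]).
      by rewrite Ho -addnA addn2 prednK // modnDr.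
    by rewrite eqn_modDr (modn_small (ltn_ord o)) eq_sym.
- move=> /eqP Ho; apply/orP; right; apply/orP; right.
  by rewrite /Vx xpair_eqE /= -val_eqE /= val_io Ho ?modn_mod.
Qed.

Lemma nbrVl n K c w : padj (Vx n (K + c.+1)) w ->
  w \in [:: Vx n (K + c); Vx n (K + c.+2); Ux n (K + c.+1)].
Proof.
move/nbrV.
have -> : Vx n (K + c.+1 + n) = Vx n (K + c).
  by apply: Vx_mod; rewrite -addnA addSnnS addnA modnDr.
by have -> : (K + c.+1).+1 = K + c.+2 by rewrite !addnS.
Qed.

Lemma nbrUl n K c w : 1 <= n -> padj (Ux n (K + c.+2)) w ->
  w \in [:: Ux n (K + c); Ux n (K + c.+4); Vx n (K + c.+2)].
Proof.
move=> Hn /(nbrU Hn).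
have -> : Ux n (K + c.+2 + n.-1) = Ux n (K + c).
  apply: Ux_mod; rewrite -addnA.
  have -> : c.+2 + n.-1 = c + n.+1 by rewrite -(prednK Hn); nlia.
  by rewrite addnA modnDr.
by have -> : (K + c.+2).+2 = K + c.+4 by rewrite !addnS.
Qed.

Record clause := Clause { cvars : seq nat; cev : (nat -> nat) -> bool }.

Fixpoint dfs (cls : seq clause) (fuel : nat) (p : seq nat) : bool :=
  if has (fun c => if all (fun j => j < size p) (cvars c) then ~~ cev c (fun j => nth 0 p j) else false) cls then true
  else if fuel is k.+1 then [&& dfs cls k (rcons p 0), dfs cls k (rcons p 1) & dfs cls k (rcons p 2)] else false.

Definition lnb (k : nat) : seq nat :=
  let c := k./2 in
  if odd k then (if 2 <= c then [:: (c-2).*2.+1] else [::]) ++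
                (if c <= 6 then [:: (c+2).*2.+1] else [::]) ++ [:: c.*2]
  else (if 0 < c then [:: (c-1).*2] else [::]) ++
       (if c < 8 then [:: (c.+1).*2] else [::]) ++ [:: c.*2.+1].
Definition fk k := size (lnb k) == 3.
Definition clD k := Clause (k :: lnb k) (fun a => (fk k && (a k == 0)) ==> has (fun y => a y == 2) (lnb k)).
Definition clP1 k := Clause (k :: lnb k) (fun a => (a k == 1) ==> all (fun y => a y != 2) (lnb k)).
Definition clP3 k := Clause (k :: lnb k) (fun a => (a k == 2) ==> all (fun y => a y != 2) (lnb k)).
Definition priv (a : nat -> nat) k p := (a p == 0) && all (fun z => (z == k) || (a z != 2)) (lnb p).
Definition clP2 k := Clause (k :: lnb k ++ flatten (map lnb (lnb k)))
  (fun a => (fk k && (a k == 2)) ==> (2 <= count (priv a k) (lnb k))).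
Definition ee (a : nat -> nat) w := if a w == 2 then 0 else if a w == 1 then 1
   else (count (fun y => a y == 2) (lnb w)).-1.
Definition win := iota 4 10.
Definition clR := Clause (win ++ flatten (map lnb win)) (fun a => sumn (map (ee a) win) <= 1).
Definition clT := Clause [:: 8] (fun a => a 8 == 2).
Definition clsrest := flatten (map (fun k => [:: clD k; clP1 k; clP3 k; clP2 k]) (iota 0 18)).
Definition cls := clT :: clR :: clsrest.


Fixpoint inl (T : Type) (x : T) (s : seq T) : Prop :=
  if s is y :: s' then y = x \/ inl x s' else False.

Definition cdep (c : clause) := forall a b : nat -> nat, {in cvars c, a =1 b} -> cev c a = cev c b.

Lemma In_has (T : Type) (P : pred T) (s : seq T) x : inl x s -> P x -> has P s.
Proof. elim: s => //= y s IH [<- ->//|/IH H Px]; by rewrite H ?orbT. Qed.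

Lemma has_In (T : Type) (P : pred T) (s : seq T) : has P s -> exists x, inl x s /\ P x.
Proof.
elim: s => //= y s IH /orP [Py|/IH [x [Hx Px]]]; first by exists y; split; [left|].
by exists x; split; [right|].
Qed.

Lemma dfs_sound (cl : seq clause) (Hdep : forall c, inl c cl -> cdep c) fuel :
  forall (p : seq nat) (a : nat -> nat),
  dfs cl fuel p ->
  (forall j, j < size p -> a j = nth 0 p j) ->
  (forall j, size p <= j < size p + fuel -> a j <= 2) ->
  has (fun c => ~~ cev c a) cl.
Proof.
elim: fuel => [|k IH] p a /=.
- case Hh: has => // _ Hp _.
  move: (has_In Hh) => [c [Hc]].
  case Hv: all => // Hn.
  apply: (In_has Hc); rewrite (Hdep c Hc a (fun j => nth 0 p j)) //.
  by move=> j /(allP Hv) /Hp.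
- case Hh: has.
  + move=> _ Hp _.
    move: (has_In Hh) => [c [Hc]].
    case Hv: all => // Hn.
    apply: (In_has Hc); rewrite (Hdep c Hc a (fun j => nth 0 p j)) //.
    by move=> j /(allP Hv) /Hp.
  + move=> /and3P [H0 H1 H2] Hp Hb.
    have Ha : a (size p) <= 2 by apply: Hb; rewrite leqnn /= addnS ltnS leq_addr.
    have Hrec : forall v, v = a (size p) -> dfs cl k (rcons p v) -> has (fun c => ~~ cev c a) cl.
      move=> v Hv Hd; apply: (IH _ _ Hd).
      * move=> j; rewrite size_rcons ltnS leq_eqVlt => /orP [/eqP ->|Hj].
          by rewrite nth_rcons ltnn eqxx.
        by rewrite nth_rcons Hj Hp.
      * move=> j; rewrite size_rcons => /andP [Hj1 Hj2]; apply: Hb.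
        by rewrite (ltnW Hj1) /= -addSnnS.
    move: Ha; case Hv: (a (size p)) => [|[|[|m]]] // _.
    * exact: (Hrec 0).
    * exact: (Hrec 1).
    * exact: (Hrec 2).
Qed.

Lemma dfs_ok : dfs cls 18 [::].
Proof. vm_compute. reflexivity. Qed.

Lemma inl_cat (T : Type) (x : T) s1 s2 : inl x (s1 ++ s2) -> inl x s1 \/ inl x s2.
Proof. elim: s1 => [|y s1 IH] /=; first by right. by case=> [->|/IH [H|H]]; auto. Qed.

Lemma inl_flatten_map (T : Type) (F : nat -> seq T) (s : seq nat) x :
  inl x (flatten (map F s)) -> exists k, k \in s /\ inl x (F k).
Proof.
elim: s => [|y s IH] //= /(@inl_cat T x) [H|/IH [k [Hk H]]].
- by exists y; rewrite mem_head.
- by exists k; rewrite in_cons Hk orbT.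
Qed.

Lemma inl_cls c : inl c cls ->
  c = clT \/ c = clR \/ exists k, k < 18 /\ (c = clD k \/ c = clP1 k \/ c = clP3 k \/ c = clP2 k).
Proof.
rewrite /cls => -[<-|[<-|H]]; auto.
have [k [Hk {}H]] := @inl_flatten_map clause (fun k => [:: clD k; clP1 k; clP3 k; clP2 k]) (iota 0 18) c H.
right; right; exists k; split; first by rewrite mem_iota in Hk.
by move: H => /= [<-|[<-|[<-|[<-|[]]]]]; auto.
Qed.

Lemma cdep_cls c : inl c cls -> cdep c.
Proof.
move=> /inl_cls [->|[->|[k [_ [->|[->|[->|->]]]]]]] a b H.
- by rewrite /= H // mem_head.
- change ((sumn (map (ee a) win) <= 1) = (sumn (map (ee b) win) <= 1)).
  suff -> : map (ee a) win = map (ee b) win by [].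
  apply/eq_in_map => w Hw.
  have Hw' : w \in win ++ flatten [seq lnb i | i <- win] by rewrite mem_cat Hw.
  rewrite /ee (H w Hw'); congr (if _ then _ else if _ then _ else (_).-1).
  apply: eq_in_count => y Hy; rewrite H //.
  by rewrite mem_cat; apply/orP; right; apply/flatten_mapP; exists w.
- rewrite /= H ?mem_head //; congr (_ ==> _); apply: eq_in_has => y Hy.
  by rewrite H // in_cons Hy orbT.
- rewrite /= H ?mem_head //; congr (_ ==> _); apply: eq_in_all => y Hy.
  by rewrite H // in_cons Hy orbT.
- rewrite /= H ?mem_head //; congr (_ ==> _); apply: eq_in_all => y Hy.
  by rewrite H // in_cons Hy orbT.
- rewrite /= H ?mem_head //; congr (_ ==> (2 <= _)); apply: eq_in_count => p Hp.
  rewrite /priv H; last by rewrite in_cons mem_cat Hp orbT.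
  congr (_ && _); apply: eq_in_all => z Hz; rewrite H //.
  rewrite in_cons mem_cat; apply/orP; right; apply/orP; right.
  by apply/flatten_mapP; exists p.
Qed.

Lemma cls_contra (a : nat -> nat) : (forall j, j < 18 -> a j <= 2) ->
  has (fun c => ~~ cev c a) cls.
Proof.
move=> Ha; apply: (dfs_sound cdep_cls dfs_ok) => //= j /andP [_ Hj]; exact: Ha.
Qed.

Ltac lnb_eval := repeat match goal with |- context [lnb ?k] =>
  let l := eval vm_compute in (lnb k) in rewrite (_ : lnb k = l); last by vm_compute end.
Ltac fk_eval := repeat match goal with |- context [fk ?k] =>
  let l := eval vm_compute in (fk k) in rewrite (_ : fk k = l); last by vm_compute end.

Definition glob n K k : vtx n.+1 := if odd k then Ux n (K + k./2) else Vx n (K + k./2).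

Lemma F1 n K k : k < 18 -> all (fun y => padj (glob n K k) (glob n K y)) (lnb k).
Proof.
do 18 (try (case: k => [|k])); rewrite ?ltnS ?ltn0 //= => _;
rewrite ?adjVVr ?adjVVl ?adjUUr ?adjUUl ?adjVU ?adjUV //.
Qed.

Lemma F2 n K k : 4 <= n -> k < 18 -> uniq (map (glob n K) (lnb k)).
Proof.
move=> Hn.
do 18 (try (case: k => [|k])); rewrite ?ltnS ?ltn0 // => _;
lnb_eval; rewrite /glob /= !inE ?eqVU ?eqUV ?(@neqVV n K _ _ Hn) ?(@neqUU n K _ _ Hn) //.
Qed.

Lemma F3 n K k w : 1 <= n -> k < 18 -> fk k -> padj (glob n K k) w -> w \in map (glob n K) (lnb k).
Proof.
move=> Hn.
do 18 (try (case: k => [|k])); rewrite ?ltnS ?ltn0 // => _; fk_eval; move=> //= _; lnb_eval; rewrite /glob /=;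
first [move/nbrVl | move/(nbrUl Hn)]; by [].
Qed.

Lemma F4 k y : k < 18 -> y \in lnb k -> k \in lnb y.
Proof.
move=> Hk; move: k Hk y.
have H : all (fun k => all (fun y => k \in lnb y) (lnb k)) (iota 0 18) by [].
move=> k Hk y Hy; have := allP H k; rewrite mem_iota /= => /(_ Hk) /allP; exact.
Qed.

Lemma F5 k y : k < 18 -> y \in lnb k -> y < 18.
Proof.
move=> Hk Hy.
have H : all (fun k => all (fun y => y < 18) (lnb k)) (iota 0 18) by [].
have := allP H k; rewrite mem_iota /= => /(_ Hk) /allP; exact.
Qed.

Lemma F6 k : k < 18 -> uniq (lnb k).
Proof.
move=> Hk; have H : all (fun k => uniq (lnb k)) (iota 0 18) by [].
by have := allP H k; rewrite mem_iota /= => /(_ Hk).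
Qed.

Lemma map_inj_uniq (T1 T2 : eqType) (g : T1 -> T2) (s : seq T1) x y :
  uniq (map g s) -> x \in s -> y \in s -> g x = g y -> x = y.
Proof.
elim: s => [|z s IH] //= /andP [Hz Hu].
rewrite !in_cons => /orP [/eqP ->|Hx] /orP [/eqP ->|Hy] // E.
- by move: Hz; rewrite E map_f.
- by move: Hz; rewrite -E map_f.
- exact: IH.
Qed.

Lemma padj_irr n (x : vtx n.+1) : 4 <= n -> padj x x = false.
Proof.
move=> Hn; case: x => [[] o]; rewrite /padj /=; apply/negbTE; rewrite orbb.
- rewrite -{2}(modn_small (ltn_ord o)) -[X in _ == X %% _]addn0 eqn_modDl mod0n.
  by rewrite modn_small //; nlia.
- rewrite -{2}(modn_small (ltn_ord o)) -[X in _ == X %% _]addn0 eqn_modDl mod0n.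
  by rewrite modn_small //; nlia.
Qed.

Lemma padj_deg n (x : vtx n.+1) : 4 <= n ->
  exists a b c, forall w, padj x w -> w \in [:: a; b; c].
Proof.
move=> Hn; case: x => [[] o].
- have -> : ((true, o) : vtx n.+1) = Ux n o by rewrite /Ux -ord_io.
  exists (Ux n (o + n.-1)), (Ux n o.+2), (Vx n o) => w; apply: nbrU.
  nlia.
- have -> : ((false, o) : vtx n.+1) = Vx n o by rewrite /Vx -ord_io.
  exists (Vx n (o + n)), (Vx n o.+1), (Ux n o) => w; apply: nbrV.
Qed.

Lemma core_nat n (f : vtx n.+1 -> nat) K : 4 <= n -> is_rdf f ->
  (forall g : vtx n.+1 -> nat, is_rdf g -> (weight f <= weight g)%N) ->
  (forall g : vtx n.+1 -> nat, is_rdf g -> weight g = weight f -> (#|V2 f| <= #|V2 g|)%N) ->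
  f (glob n K 8) = 2 -> 1 < sumn (map (ee (fun k => f (glob n K k))) win).
Proof.
move=> Hn Hr H3 H4 H8; rewrite ltnNge; apply/negP => HR.
set a := fun k => f (glob n K k).
have Hn1 : 1 <= n by nlia.
have Hall : forall c, inl c cls -> cev c a.
  move=> c /inl_cls [->|[->|[k [Hk [->|[->|[->|->]]]]]]].
  - by rewrite /= /a H8.
  - exact: HR.
  - rewrite /=; apply/implyP => /andP [Hfk /eqP Ha0].
    have [w' /andP [Hw' /eqP Hf2]] := (proj2 Hr) _ Ha0.
    have /mapP [y Hy Ey] := F3 Hn1 Hk Hfk Hw'.
    by apply/hasP; exists y => //; rewrite /a -Ey Hf2.
  - rewrite /=; apply/implyP => /eqP H1; apply/allP => y Hy; apply/negP => /eqP H2.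
    exact: (no_P1 Hr H3 H1 (allP (F1 n K Hk) y Hy) H2).
  - rewrite /=; apply/implyP => /eqP H1; apply/allP => y Hy; apply/negP => /eqP H2.
    apply: (no_P3 Hr H3 H4 _ _ H1 (allP (F1 n K Hk) y Hy) H2).
    + by move=> x; apply: padj_irr.
    + by move=> x; apply: padj_deg.
  - rewrite /=; apply/implyP => /andP [Hfk /eqP H2].
    have [p [q [Hpq Hp Hq]]] := P2 Hr H3 H4 H2.
    have Hpriv : forall p, privb f (glob n K k) p ->
        exists2 p', p' \in lnb k & p = glob n K p' /\ priv a k p'.
      move=> p0 /and3P [Hxp /eqP Hp0 /forallP Hpz].
      have /mapP [p' Hp' Ep] := F3 Hn1 Hk Hfk Hxp.
      exists p' => //; split => //.
      rewrite /priv /a -Ep Hp0 eqxx /=; apply/allP => z Hz.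
      have Hp'18 := F5 Hk Hp'.
      case: eqP => // Haz /=; apply/negP => /eqP Hz2; apply: Haz.
      apply: (map_inj_uniq (F2 K Hn Hp'18) Hz (F4 Hk Hp')).
      have := Hpz (glob n K z); rewrite Ep (allP (F1 n K Hp'18) z Hz) /= Hz2 eqxx /=.
      by move/eqP.
    have [p' Hp' [Ep Pp]] := Hpriv p Hp.
    have [q' Hq' [Eq Pq]] := Hpriv q Hq.
    have Hpq' : p' != q' by apply/eqP => E; move: Hpq; rewrite Ep Eq E eqxx.
    rewrite -size_filter.
    have -> : 2 = size [:: p'; q'] by [].
    apply: uniq_leq_size; first by rewrite /= inE Hpq'.
    by move=> z; rewrite !inE => /orP [] /eqP ->; rewrite mem_filter ?Pp ?Pq.
have Hb : forall j, j < 18 -> a j <= 2 by move=> j _; exact: (proj1 Hr).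
have [c [Hc Hnc]] := has_In (cls_contra Hb).
by move: Hnc; rewrite Hall.
Qed.

Import Order.TTheory GRing.Theory Num.Theory.

Lemma card_nbr n K (f : vtx n.+1 -> nat) k : 4 <= n -> k < 18 -> fk k ->
  #|[set y | padj (glob n K k) y && (f y == 2)]| = count (fun y => f (glob n K y) == 2) (lnb k).
Proof.
move=> Hn Hk Hfk.
have Hn1 : 1 <= n by apply: leq_trans Hn.
have -> : [set y | padj (glob n K k) y && (f y == 2)] =
          [set y in filter (fun y => f y == 2) (map (glob n K) (lnb k))].
  apply/setP => y; rewrite !inE mem_filter andbC; congr (_ && _).
  apply/idP/idP => [H|/mapP [y' Hy' ->]]; first exact: F3 Hn1 Hk Hfk H.
  exact: (allP (F1 n K Hk)).
rewrite cardsE; move/card_uniqP: (filter_uniq (fun y => f y == 2) (F2 K Hn Hk)) => ->.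
by rewrite size_filter count_map.
Qed.

Local Open Scope ring_scope.

Lemma rdf0 n (f : vtx n -> nat) w : is_rdf f -> f w != 2%N -> f w != 1%N -> f w = 0%N.
Proof. by move=> [Hb _]; move: (Hb w); case: (f w) => [|[|[|m]]]. Qed.

Lemma half_le (m : nat) : (1 <= m)%N -> 1 / 2 <= m%:R / 2 :> rat.
Proof.
move=> Hm; rewrite ler_pM2r; first by rewrite ler1n.
by rewrite invr_gt0.
Qed.

Lemma r_nonneg n (f : vtx n -> nat) w : is_rdf f -> 0 <= r_f f w.
Proof.
move=> Hr; rewrite /r_f /g_f subr_ge0.
case: ifP => // /negbT H2; case: ifP => [_|/negbT H1]; first by [].
have Hf0 := rdf0 Hr H2 H1.
have [w' Hw'] := (proj2 Hr) w Hf0.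
apply: half_le; apply/card_gt0P; exists w'; by rewrite inE.
Qed.

Lemma r_glob n K (f : vtx n.+1 -> nat) k : (4 <= n)%N -> (k < 18)%N -> fk k -> is_rdf f ->
  r_f f (glob n K k) = (ee (fun j => f (glob n K j)) k)%:R / 2.
Proof.
move=> Hn Hk Hfk Hr.
rewrite /r_f /g_f /ee -(@card_nbr n K f k Hn Hk Hfk).
case: ifP => [_|/negbT H2]; first by rewrite subrr mul0r.
case: ifP => [_|/negbT H1]; first by apply/eqP.
have Hf0 := rdf0 Hr H2 H1.
have [w' Hw'] := (proj2 Hr) _ Hf0.
have : (0 < #|[set y | padj (glob n K k) y && (f y == 2%N)]|)%N.
  by apply/card_gt0P; exists w'; rewrite inE.
case: #|_| => [//|c] _ /=.
by rewrite -natr1 mulrDl addrK.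
Qed.

Lemma sum_r n K (f : vtx n.+1 -> nat) (s : seq nat) : (4 <= n)%N -> is_rdf f ->
  (forall k, k \in s -> (k < 18)%N && fk k) ->
  \sum_(w <- map (glob n K) s) r_f f w = (sumn (map (ee (fun j => f (glob n K j))) s))%:R / 2.
Proof.
move=> Hn Hr; elim: s => [|k s IH] Hs; first by rewrite big_nil mul0r.
rewrite /= big_cons IH; last by move=> j Hj; apply: Hs; rewrite in_cons Hj orbT.
have /andP [Hk Hfk] := Hs k (mem_head _ _).
by rewrite r_glob // natrD mulrDl.
Qed.

Lemma sum_sub (T : finType) (F : T -> rat) (s : seq T) (A : {set T}) :
  uniq s -> {subset s <= A} -> (forall x, 0 <= F x) ->
  \sum_(x <- s) F x <= \sum_(x in A) F x.
Proof.
move=> Hu Hs Hpos; rewrite (big_uniq _ Hu) [X in _ <= X](bigID (mem s)) /=.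
rewrite -[X in X <= _]addr0; apply: lerD; last exact: sumr_ge0.
rewrite (eq_bigl (fun i => (i \in A) && (i \in s))) ?lexx // => x.
by case Hx: (x \in s); rewrite ?andbF ?andbT ?Hs.
Qed.

Local Close Scope ring_scope.

Lemma uniq_win n K : 4 <= n -> uniq (map (glob n K) win).
Proof.
move=> Hn; rewrite /win /glob /= !inE ?eqVU ?eqUV ?(@neqVV n K _ _ Hn) ?(@neqUU n K _ _ Hn) //.
Qed.

Lemma glob_eq n K k : glob n K k = (odd k, inord ((K + k./2) %% n.+1)).
Proof. by rewrite /glob; case: odd. Qed.

Lemma memVp n K i : (forall c, 2 <= c <= 6 -> exists2 j, j \in iota i 7 & (K + c) %% n.+1 = j %% n.+1) ->
  forall k, k \in win -> glob n K k \in Vp n.+1 i 7.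
Proof.
move=> HK k Hk.
have Hc : 2 <= k./2 <= 6.
  have H : all (fun k => 2 <= k./2 <= 6) win by [].
  exact: (allP H k Hk).
have [j Hj Ej] := HK _ Hc.
rewrite inE glob_eq; apply/hasP; exists j => //.
by rewrite /= val_io Ej.
Qed.

Lemma tgt n K i d (x : vtx n.+1) : (K + 4) %% n.+1 = (i + d) %% n.+1 -> vv (i + d) x -> x = glob n K 8.
Proof.
move=> E; case: x => [b o]; rewrite /vv /= => /andP [/eqP -> /eqP Ho].
rewrite glob_eq /=; congr (_, _); apply: val_inj; by rewrite /= val_io E Ho.
Qed.

Local Open Scope ring_scope.

Lemma win_case n K i (f : vtx n.+1 -> nat) : (4 <= n)%N -> is_rdf f ->
  (forall g : vtx n.+1 -> nat, is_rdf g -> (weight f <= weight g)%N) ->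
  (forall g : vtx n.+1 -> nat, is_rdf g -> weight g = weight f -> (#|V2 f| <= #|V2 g|)%N) ->
  r_fS f (Vp n.+1 i 7) <= 1 / 2 ->
  (forall k, k \in win -> glob n K k \in Vp n.+1 i 7) ->
  f (glob n K 8) != 2%N.
Proof.
move=> Hn Hr H3 H4 HR HV; apply/negP => /eqP H8.
have Hgt := core_nat Hn Hr H3 H4 H8.
have Hwin : forall k, k \in win -> (k < 18)%N && fk k.
  have H : all (fun k => (k < 18)%N && fk k) win by [].
  by move=> k Hk; apply: (allP H k Hk).
have Hs := @sum_r n K f win Hn Hr Hwin.
have HV' : {subset map (glob n K) win <= Vp n.+1 i 7} by move=> w /mapP [k Hk ->]; apply: HV.
have Hle := sum_sub (F := r_f f) (uniq_win K Hn) HV' (fun w => r_nonneg w Hr).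
move: (le_trans Hle HR); rewrite Hs ler_pM2r; last by rewrite invr_gt0.
by rewrite lern1 leqNgt Hgt.
Qed.

Theorem lemma2p6 (n : nat) (f : vtx n -> nat) (i : nat) :
  (5 <= n)%N ->
  is_rdf f ->
  (forall g : vtx n -> nat, is_rdf g -> (weight f <= weight g)%N) ->
  (forall g : vtx n -> nat, is_rdf g -> weight g = weight f ->
      (#|V2 f| <= #|V2 g|)%N) ->
  r_fS f (Vp n i 7) <= 1 / 2 ->
  (forall x : vtx n, vv (i + 2)%N x -> x \notin V2 f) /\
  (forall x : vtx n, vv (i + 4)%N x -> x \notin V2 f).
Proof.
case: n f => [|n] f // Hn5 Hr H3 H4 HR.
have Hn : (4 <= n)%N by [].
split=> x Hx; rewrite inE.
- have Ex : x = glob n (i + n.-1) 8.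
    apply: (tgt (d := 2)) Hx.
    have -> : (i + n.-1 + 4 = (i + 2) + n.+1)%N by rewrite -subn1; nlia.
    by rewrite modnDr.
  rewrite Ex; apply: (win_case (i := i)) => //; apply: memVp => c /andP [Hc1 Hc2].
  exists (i + (c - 2))%N; first by rewrite mem_iota; apply/andP; split; nlia.
  have -> : (i + n.-1 + c = i + (c - 2) + n.+1)%N by rewrite -subn1; nlia.
  by rewrite modnDr.
- have Ex : x = glob n i 8 by apply: (tgt (d := 4)) Hx.
  rewrite Ex; apply: (win_case (i := i)) => //; apply: memVp => c /andP [Hc1 Hc2].
  by exists (i + c)%N => //; rewrite mem_iota; apply/andP; split; nlia.
Qed.
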